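(* Let $j_1,j_2,j_3$ be distinct constants and use cyclic triples $(\alpha,\beta,\gamma)$ of $(1,2,3)$. On $M$ with coordinates $(S_\alpha,T_\alpha)$ let $P_0=\sum_\alpha S_\alpha\,\partial_{T_\beta}\wedge\partial_{T_\gamma}$, $P_\alpha=S_\alpha\,\partial_{S_\beta}\wedge\partial_{S_\gamma}+(T_\beta\partial_{S_\gamma}-T_\gamma\partial_{S_\beta})\wedge\partial_{T_\alpha}$, $P=P_1+P_2+P_3$, $Q=P_0+j_1P_1+j_2P_2+j_3P_3$. Let $\hat M=M\times\mathcal E$, $\mathcal E$ a curve with local parameter $\zeta$, let $A_\alpha(\zeta),B_\alpha(\zeta)$, $v(\zeta)$ be functions on $\mathcal E$, $\hat C_2=\sum_\alpha(B_\alpha S_\alpha+A_\alpha T_\alpha)$, $\hat P,\hat Q$ the lifts of $P,Q$ to $\hat M$ determined by $\hat C_2$, $\hat Z=\sum_\alpha A_\alpha\partial_{S_\alpha}+B_\alpha\partial_{T_\alpha}$, $\hat{\mathcal S}=\{\hat C_2=0\}$. Assume the seven functions $A_\alpha,B_\alpha,v$ satisfy the ten algebraic constraints (for all cyclic $(\alpha,\beta,\gamma)$) \[ A_\alpha^2+(v+j_\beta)B_\gamma^2+(v+j_\gamma)B_\beta^2=0,\quad (v+j_\alpha)A_\alpha B_\beta-(v+j_\beta)A_\beta B_\alpha=0, \] \[ A_\alpha A_\beta-(v+j_\gamma)B_\alpha B_\beta=0,\quad \sum_{\alpha=1}^3(v+j_\alpha)A_\alpha^2=0 . \] Then the 3-vector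 $\hat Z\wedge d_{(\hat Q+v(\zeta)\hat P)}\hat Z$ vanishes on $\hat{\mathcal S}$.
   Context: The lift $\hat R$ (for $R=P$ or $R=Q$) is the bivector on $\hat M$ (coordinates $(S_\alpha,T_\alpha,\zeta)$, assuming $\partial\hat C_2/\partial\zeta\ne0$) whose brackets among the $S_\alpha,T_\alpha$ are those of $R$ and with $\{S_\alpha,\zeta\}_{\hat R}=-\big(\sum_\beta \tfrac{\partial\hat C_2}{\partial S_\beta}\{S_\alpha,S_\beta\}_R+\tfrac{\partial\hat C_2}{\partial T_\beta}\{S_\alpha,T_\beta\}_R\big)\big(\tfrac{\partial\hat C_2}{\partial\zeta}\big)^{-1}$, and $\{T_\alpha,\zeta\}_{\hat R}$ given by the same formula with $S_\alpha$ replaced by $T_\alpha$ in the first slot. For a bivector $R$, $d_R=[R,\cdot\,]_{Sch}$ (Schouten bracket). *)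

(* Defs.v *)
From HB Require Import structures.
From mathcomp Require Import all_boot all_order all_algebra.
From mathcomp Require Import all_classical all_reals all_analysis.
Set Implicit Arguments. Unset Strict Implicit. Unset Printing Implicit Defensive.
Import Order.TTheory GRing.Theory Num.Theory.
Import numFieldNormedType.Exports.
Local Open Scope ring_scope.

(* Coordinates on \hat M = M x E :
   index 0,1,2 = S_1,S_2,S_3 ; 3,4,5 = T_1,T_2,T_3 ; 6 = zeta.
   A point is a function 'I_7 -> K. *)
Section Defs.
Variable K : numFieldType.

Definition pt := 'I_7 -> K.
Definition fn := pt -> K.
Definition vfield := 'I_7 -> fn.
Definition bivector := 'I_7 -> 'I_7 -> fn.  (* components R^{ij} = {x_i,x_j} *)
Definition trivector := 'I_7 -> 'I_7 -> 'I_7 -> fn.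

Definition iS (a : 'I_3) : 'I_7 := inord a.
Definition iT (a : 'I_3) : 'I_7 := inord (3 + a).
Definition iz : 'I_7 := inord 6.

(* cyclic successor: (alpha, beta, gamma) = (a, nx a, nx (nx a)) *)
Definition nx (a : 'I_3) : 'I_3 := ordS a.

Definition pd (i : 'I_7) (F : fn) (x : pt) : K :=
  derive1 (fun t : K => F (fun l => if l == i then x l + t else x l)) 0.

Definition ewedge (a b : 'I_7) : bivector :=
  fun k l _ => ((k == a) && (l == b))%:R - ((k == b) && (l == a))%:R.

Definition bv_add (R1 R2 : bivector) : bivector := fun i j x => R1 i j x + R2 i j x.
Definition bv_scale (f : fn) (R : bivector) : bivector := fun i j x => f x * R i j x.

Definition Palpha (a : 'I_3) : bivector :=
  let b := nx a in let c := nx (nx a) in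
  bv_add (bv_scale (fun x => x (iS a)) (ewedge (iS b) (iS c)))
   (bv_add (bv_scale (fun x => x (iT b)) (ewedge (iS c) (iT a)))
           (bv_scale (fun x => - x (iT c)) (ewedge (iS b) (iT a)))).

Definition P0 : bivector := fun i j x =>
  \sum_(a < 3) x (iS a) * ewedge (iT (nx a)) (iT (nx (nx a))) i j x.

Definition Pbv : bivector := fun i j x => \sum_(a < 3) Palpha a i j x.

Definition Qbv (jc : 'I_3 -> K) : bivector := fun i j x =>
  P0 i j x + \sum_(a < 3) jc a * Palpha a i j x.

Definition liftcol (C : fn) (R : bivector) (i : 'I_7) : fn := fun x =>
  - (\sum_(k < 7 | k != iz) pd k C x * R i k x) / pd iz C x.

Definition liftbv (C : fn) (R : bivector) : bivector := fun i j x =>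
  if i == iz then (if j == iz then 0 else - liftcol C R j x)
  else if j == iz then liftcol C R i x else R i j x.

Definition lie (X : vfield) (R : bivector) : bivector := fun i j x =>
  \sum_(k < 7) X k x * pd k (R i j) x
  - \sum_(k < 7) R k j x * pd k (X i) x
  - \sum_(k < 7) R i k x * pd k (X j) x.

(* d_R X = [R, X]_Sch = - L_X R  for a bivector R and a vector field X *)
Definition dR (R : bivector) (X : vfield) : bivector := fun i j x => - lie X R i j x.

Definition wedge12 (X : vfield) (W : bivector) : trivector := fun i j k x =>
  X i x * W j k x + X j x * W k i x + X k x * W i j x.

Definition C2hat (A B : 'I_3 -> K -> K) : fn := fun x =>
  \sum_(a < 3) (B a (x iz) * x (iS a) + A a (x iz) * x (iT a)).

Definition Zhat (A B : 'I_3 -> K -> K) : vfield := fun i x =>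
  \sum_(a < 3) ((i == iS a)%:R * A a (x iz) + (i == iT a)%:R * B a (x iz)).

End Defs.

(* Main.v *)
Require Import Defs.
From HB Require Import structures.
From mathcomp Require Import all_boot all_order all_algebra.
From mathcomp Require Import all_classical all_reals all_analysis.
From mathcomp Require Import ring.
Import Order.TTheory GRing.Theory Num.Theory.
Import numFieldNormedType.Exports.
Local Open Scope ring_scope.




Section S.
Variable K : numFieldType.

Lemma der_aff (a b : K) : is_derive (0:K) (1:K) (fun t : K => a + t * b) b.
Proof.
have H := is_deriveD (@is_derive_cst K K K a (0:K) (1:K)) (is_deriveM (@is_derive_id K K (0:K) (1:K)) (@is_derive_cst K K K b 0 1)).
match type of H with is_derive _ _ ?F _ =>
  have -> : (fun t : K => a + t * b) = F by apply/funext end.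
apply: (is_derive_eq H).
by rewrite /= scaler0 !add0r /GRing.scale /= mulr1.
Qed.

Lemma der_ratio (a b c d : K) : c != 0 ->
  derive1 (fun t : K => (a + t * b) / (c + t * d)) 0 = (b * c - a * d) / c ^+ 2.
Proof.
move=> c0.
have Hg : (fun t : K => c + t * d) 0 != 0 by rewrite /= mul0r addr0.
have dg := der_aff c d.
have dgi : is_derive (0:K) (1:K) (fun y => ((fun t : K => c + t * d) y)^-1)
   (- ((fun t : K => c + t * d) 0) ^- 2 *: d).
  apply: DeriveDef; first by apply: derivableV =>//; exact: (ex_derive dg).
  by rewrite deriveV // (derive_val).
have H := is_deriveM (der_aff a b) dgi.
rewrite derive1E.
match type of H with is_derive _ _ ?F _ =>
  have -> : (fun t : K => (a + t * b) / (c + t * d)) = F by apply/funext end.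
rewrite (@derive_val _ _ _ _ _ _ _ H) /= /GRing.scale /= !mul0r !addr0.
by field.
Qed.

Lemma der_shift (f : K -> K) (z : K) : derivable f z 1 ->
  is_derive (0:K) (1:K) (fun t => f (z + t)) ('D_1 f z).
Proof.
move=> df.
have E : (fun h : K => h^-1 *: ((fun t => f (z + t)) (h *: 1 + 0) - (fun t => f (z + t)) 0))
   = (fun h : K => h^-1 *: (f (h *: 1 + z) - f z)).
  by apply/funext => h /=; rewrite !addr0 [z + _]addrC.
apply: DeriveDef.
  by rewrite /derivable E.
by rewrite /derive E.
Qed.

End S.

Lemma valS (a : 'I_3) : val (iS a) = val a.
Proof. by rewrite /iS /= inordK // (leq_trans (ltn_ord a)). Qed.
Lemma valT (a : 'I_3) : val (iT a) = 3 + val a.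
Proof. by rewrite /iT /= inordK //; case: a => [[|[|[|]]] ?]. Qed.
Lemma valz : val iz = 6. Proof. by rewrite /iz /= inordK. Qed.
Lemma eqSS (a b : 'I_3) : (iS a == iS b) = (a == b).
Proof. by rewrite -val_eqE valS valS val_eqE. Qed.
Lemma eqTT (a b : 'I_3) : (iT a == iT b) = (a == b).
Proof. by rewrite -val_eqE valT valT /= eqn_add2l val_eqE. Qed.
Lemma eqST (a b : 'I_3) : (iS a == iT b) = false.
Proof. by rewrite -val_eqE valS valT; apply/negbTE; rewrite neq_ltn (leq_trans (ltn_ord a)) ?leq_addr. Qed.
Lemma eqTS (a b : 'I_3) : (iT a == iS b) = false.
Proof. by rewrite eq_sym eqST. Qed.
Lemma eqSz (a : 'I_3) : (iS a == iz) = false.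
Proof. by rewrite -val_eqE valS valz; apply/negbTE; rewrite neq_ltn (leq_trans (ltn_ord a)). Qed.
Lemma eqTz (a : 'I_3) : (iT a == iz) = false.
Proof. rewrite -val_eqE valT valz; apply/negbTE; rewrite neq_ltn -[6]/(3+3)%N ltn_add2l. by rewrite (ltn_ord a). Qed.
Lemma eqzS (a : 'I_3) : (iz == iS a) = false. Proof. by rewrite eq_sym eqSz. Qed.
Lemma eqzT (a : 'I_3) : (iz == iT a) = false. Proof. by rewrite eq_sym eqTz. Qed.

Definition a0 : 'I_3 := @Ordinal 3 0 isT.
Definition a1 : 'I_3 := @Ordinal 3 1 isT.
Definition a2 : 'I_3 := @Ordinal 3 2 isT.
Lemma nx0 : nx a0 = a1. Proof. by apply: val_inj. Qed.
Lemma nx1 : nx a1 = a2. Proof. by apply: val_inj. Qed.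
Lemma nx2 : nx a2 = a0. Proof. by apply: val_inj. Qed.
Lemma sum3 (R : nmodType) (F : 'I_3 -> R) : \sum_(a < 3) F a = F a0 + F a1 + F a2.
Proof.
rewrite !big_ord_recl big_ord0 addr0 addrA /=.
by congr (F _ + F _ + F _); apply: val_inj.
Qed.
Lemma ord3 (a : 'I_3) : a = a0 \/ a = a1 \/ a = a2.
Proof. by case: a => [[|[|[|]]] H]; [left|right;left|right;right|]; try apply: val_inj. Qed.
Lemma ord7 (i : 'I_7) : i = iz \/ exists a, i = iS a \/ i = iT a.
Proof.
case: i => [[|[|[|[|[|[|[|n]]]]]]] H].
- by right; exists a0; left; apply: val_inj; rewrite valS.
- by right; exists a1; left; apply: val_inj; rewrite valS.
- by right; exists a2; left; apply: val_inj; rewrite valS.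
- by right; exists a0; right; apply: val_inj; rewrite valT.
- by right; exists a1; right; apply: val_inj; rewrite valT.
- by right; exists a2; right; apply: val_inj; rewrite valT.
- by left; apply: val_inj; rewrite valz.
- by [].
Qed.
Lemma a01 : (a0 == a1) = false. Proof. by []. Qed.
Lemma a02 : (a0 == a2) = false. Proof. by []. Qed.
Lemma a10 : (a1 == a0) = false. Proof. by []. Qed.
Lemma a12 : (a1 == a2) = false. Proof. by []. Qed.
Lemma a20 : (a2 == a0) = false. Proof. by []. Qed.
Lemma a21 : (a2 == a1) = false. Proof. by []. Qed.
Section Main.
Variable K : numFieldType.
Variable jc : 'I_3 -> K.
Variables A B : 'I_3 -> K -> K.
Variable v : K -> K.

Definition e (k : 'I_7) : pt K := fun l => (l == k)%:R.
Definition sh (x : pt K) (k : 'I_7) (t : K) : pt K :=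
  fun l => if l == k then x l + t else x l.
Definition lin7 (G : pt K -> K) :=
  forall s y1 y2, G (fun l => s * y1 l + y2 l) = s * G y1 + G y2.

Lemma pdE k (F : fn K) x : pd k F x = derive1 (fun t => F (sh x k t)) 0.
Proof. by []. Qed.

Lemma sh_iz x k t : k != iz -> sh x k t iz = x iz.
Proof. by rewrite /sh eq_sym => /negbTE ->. Qed.

Lemma lin_shift G x k t : lin7 G -> G (sh x k t) = G x + t * G (e k).
Proof.
move=> lG.
have -> : sh x k t = (fun l => t * e k l + x l).
  by apply/funext => l; rewrite /sh /e; case: (l == k) => /=; rewrite ?mulr1 ?mulr0 ?add0r // addrC.
by rewrite lG addrC.
Qed.

Lemma lin0 G : lin7 G -> G (fun _ => 0) = 0.
Proof.
move=> lG; have := lG 1 (fun _ => 0) (fun _ => 0).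
have -> : (fun l : 'I_7 => 1 * (fun _ : 'I_7 => 0 : K) l + (fun _ => 0) l) = (fun _ => 0).
  by apply/funext => l; rewrite mul1r addr0.
rewrite mul1r => H.
have : G (fun _ => 0) + G (fun _ => 0) = G (fun _ => 0) + 0 by rewrite addr0 -H.
by move/addrI.
Qed.

Lemma lin_sum (I : eqType) (r : seq I) (P : pred I) (F : I -> pt K -> K) :
  (forall i, lin7 (F i)) -> lin7 (fun y => \sum_(i <- r | P i) F i y).
Proof.
move=> lF s y1 y2; rewrite mulr_sumr -big_split /=; apply: eq_bigr => i _; exact: lF.
Qed.

Lemma lin_add F G : lin7 F -> lin7 G -> lin7 (fun y => F y + G y).
Proof. by move=> lF lG s y1 y2; rewrite lF lG; ring. Qed.
Lemma lin_scal c F : lin7 F -> lin7 (fun y => c * F y).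
Proof. by move=> lF s y1 y2; rewrite lF; ring. Qed.
Lemma lin_scar c F : lin7 F -> lin7 (fun y => F y * c).
Proof. by move=> lF s y1 y2; rewrite lF; ring. Qed.
Lemma lin_opp F : lin7 F -> lin7 (fun y => - F y).
Proof. by move=> lF s y1 y2; rewrite lF; ring. Qed.
Lemma lin_coord l : lin7 (fun y => y l).
Proof. by []. Qed.

Lemma lin_sum_list G (X : pt K) (r : seq 'I_7) : lin7 G ->
  \sum_(l <- r) X l * G (e l) = G (fun m => \sum_(l <- r) X l * e l m).
Proof.
move=> lG; elim: r => [|a r IH].
  rewrite big_nil.
  have -> : (fun m : 'I_7 => \sum_(l <- [::]) X l * e l m) = (fun _ => 0).
    by apply/funext => m; rewrite big_nil.
  by rewrite lin0.
rewrite big_cons.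
have -> : (fun m => \sum_(l <- a :: r) X l * e l m) = (fun m => X a * e a m + \sum_(l <- r) X l * e l m).
  by apply/funext => m; rewrite big_cons.
by rewrite lG IH.
Qed.

Lemma lin_sumX G (X : pt K) : lin7 G -> \sum_(l < 7) X l * G (e l) = G X.
Proof.
move=> lG; rewrite lin_sum_list //; congr G.
apply/funext => m; rewrite (bigD1 m) //= /e eqxx mulr1 big1 ?addr0 // => l.
by rewrite eq_sym => /negbTE ->; rewrite mulr0.
Qed.

Lemma pd_lin k F G x : lin7 G -> (forall t, F (sh x k t) = G (sh x k t)) -> pd k F x = G (e k).
Proof.
move=> lG HF; rewrite pdE.
have -> : (fun t => F (sh x k t)) = (fun t => G x + t * G (e k)).
  by apply/funext => t; rewrite HF lin_shift.
by rewrite derive1E (@derive_val _ _ _ _ _ _ _ (der_aff _ _ _)).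
Qed.

Lemma pd_const k F x : (forall t, F (sh x k t) = F x) -> pd k F x = 0.
Proof.
move=> HF; rewrite pdE.
have -> : (fun t => F (sh x k t)) = (fun t => F x + t * 0).
  by apply/funext => t; rewrite HF mulr0 addr0.
by rewrite derive1E (@derive_val _ _ _ _ _ _ _ (der_aff _ _ _)).
Qed.

Lemma pd_ratio k F G1 G2 x : lin7 G1 -> lin7 G2 -> G2 x != 0 ->
  (forall t, F (sh x k t) = G1 (sh x k t) / G2 (sh x k t)) ->
  pd k F x = (fun y => (G1 y * G2 x - G1 x * G2 y) / G2 x ^+ 2) (e k).
Proof.
move=> l1 l2 nz HF; rewrite pdE.
have -> : (fun t => F (sh x k t)) = (fun t => (G1 x + t * G1 (e k)) / (G2 x + t * G2 (e k))).
  by apply/funext => t; rewrite HF !lin_shift.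
by rewrite der_ratio.
Qed.


Definition Cfr z (y : pt K) := \sum_(a < 3) (B a z * y (iS a) + A a z * y (iT a)).
Definition Czfr z (y : pt K) := \sum_(a < 3) ('D_1 (B a) z * y (iS a) + 'D_1 (A a) z * y (iT a)).
Definition Pz z i j (y : pt K) := Qbv jc i j y + v z * Pbv i j y.
Definition hz z i (y : pt K) := \sum_(k < 7 | k != iz) Cfr z (e k) * Pz z i k y.

Lemma lin_Cfr z : lin7 (Cfr z).
Proof. move=> s y1 y2; rewrite /Cfr mulr_sumr -big_split; apply: eq_bigr => a _ /=; ring. Qed.
Lemma lin_Czfr z : lin7 (Czfr z).
Proof. move=> s y1 y2; rewrite /Czfr mulr_sumr -big_split; apply: eq_bigr => a _ /=; ring. Qed.
Lemma lin_Palpha a i j : lin7 (Palpha a i j).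
Proof. move=> s y1 y2; rewrite /Palpha /bv_add /bv_scale; ring. Qed.
Lemma lin_P0 i j : lin7 (@P0 K i j).
Proof. move=> s y1 y2; rewrite /P0 mulr_sumr -big_split; apply: eq_bigr => a _ /=; rewrite /ewedge; ring. Qed.
Lemma lin_Pz z i j : lin7 (Pz z i j).
Proof.
rewrite /Pz /Qbv /Pbv.
apply: lin_add; first apply: lin_add.
- exact: lin_P0.
- apply: lin_sum => a; apply: lin_scal; exact: lin_Palpha.
- apply: lin_scal; apply: lin_sum => a; exact: lin_Palpha.
Qed.
Lemma lin_hz z i : lin7 (hz z i).
Proof. rewrite /hz; apply: lin_sum => k; apply: lin_scal; exact: lin_Pz. Qed.
Lemma lin_ratio G1 G2 x : lin7 G1 -> lin7 G2 ->
  lin7 (fun y => (G1 y * G2 x - G1 x * G2 y) / G2 x ^+ 2).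
Proof. by move=> l1 l2 s y1 y2; rewrite l1 l2; ring. Qed.

Lemma pdC_k y k : k != iz -> pd k (C2hat A B) y = Cfr (y iz) (e k).
Proof.
move=> hk; apply: pd_lin; first exact: lin_Cfr.
by move=> t; rewrite /C2hat /Cfr sh_iz.
Qed.

Lemma der_mulc (f : K -> K) z c : derivable f z 1 ->
  is_derive (0:K) (1:K) (fun t => f (z + t) * c) ('D_1 f z * c).
Proof.
move=> df.
have H := is_deriveM (@der_shift K f z df) (@is_derive_cst K K K c 0 1).
match type of H with is_derive _ _ ?F _ =>
  have -> : (fun t : K => f (z + t) * c) = F by apply/funext end.
apply: (is_derive_eq H).
by rewrite /= /GRing.scale /= mulr0 add0r mulrC.
Qed.

Lemma der_addf (F G : K -> K) dF dG : is_derive (0:K) (1:K) F dF -> is_derive (0:K) (1:K) G dG ->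
  is_derive (0:K) (1:K) (fun t => F t + G t) (dF + dG).
Proof.
move=> hF hG.
have H := is_deriveD hF hG.
match type of H with is_derive _ _ ?FF _ =>
  have -> : (fun t : K => F t + G t) = FF by apply/funext end.
exact: H.
Qed.
Arguments der_addf {F G dF dG}.

Lemma pdC_z (U : set K) y : U (y iz) ->
  (forall a z, U z -> derivable (A a) z 1) ->
  (forall a z, U z -> derivable (B a) z 1) ->
  pd iz (C2hat A B) y = Czfr (y iz) y.
Proof.
move=> Uy dA dB; rewrite pdE.
set z := y iz.
have -> : (fun t => C2hat A B (sh y iz t)) =
   (fun t => ((B a0 (z + t) * y (iS a0) + A a0 (z + t) * y (iT a0)) +
              (B a1 (z + t) * y (iS a1) + A a1 (z + t) * y (iT a1))) +
              (B a2 (z + t) * y (iS a2) + A a2 (z + t) * y (iT a2))).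
  apply/funext => t; rewrite /C2hat sum3 /sh /= eqxx !eqSz !eqTz //.
have H := der_addf (der_addf (der_addf (@der_mulc (B a0) z (y (iS a0)) (dB a0 _ Uy)) (@der_mulc (A a0) z (y (iT a0)) (dA a0 _ Uy)))
                             (der_addf (@der_mulc (B a1) z (y (iS a1)) (dB a1 _ Uy)) (@der_mulc (A a1) z (y (iT a1)) (dA a1 _ Uy))))
                   (der_addf (@der_mulc (B a2) z (y (iS a2)) (dB a2 _ Uy)) (@der_mulc (A a2) z (y (iT a2)) (dA a2 _ Uy))).
by rewrite derive1E (@derive_val _ _ _ _ _ _ _ H) /Czfr sum3.
Qed.

Definition Rb := bv_add (liftbv (C2hat A B) (Qbv jc))
                    (bv_scale (fun y => v (y iz)) (liftbv (C2hat A B) (@Pbv K))).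

Lemma R_formula (U : set K) y : U (y iz) ->
  (forall a z, U z -> derivable (A a) z 1) ->
  (forall a z, U z -> derivable (B a) z 1) -> forall i j,
  Rb i j y = if i == iz then (if j == iz then 0 else hz (y iz) j y / Czfr (y iz) y)
             else if j == iz then - (hz (y iz) i y / Czfr (y iz) y) else Pz (y iz) i j y.
Proof.
move=> Uy dA dB i j.
have Eh : forall m, hz (y iz) m y = \sum_(k < 7 | k != iz) pd k (C2hat A B) y * Qbv jc m k y
            + v (y iz) * \sum_(k < 7 | k != iz) pd k (C2hat A B) y * Pbv m k y.
  move=> m; rewrite /hz mulr_sumr -big_split /=; apply: eq_bigr => k hk.
  by rewrite pdC_k // /Pz; ring.
rewrite /Rb /bv_add /bv_scale /liftbv /liftcol.
case: (i == iz); case: (j == iz) => //=; rewrite ?Eh ?(@pdC_z U y Uy dA dB); ring.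
Qed.

Lemma sum7 (G : 'I_7 -> K) : \sum_(k < 7) G k = G iz + \sum_(a<3) (G (iS a) + G (iT a)).
Proof.
have -> : \sum_(k<7) G k = \sum_(k<7) G (inord k) by apply: eq_bigr => k _; rewrite inord_val.
rewrite sum3 !big_ord_recl big_ord0 /= /iS /iT /iz /=.
rewrite /bump /=.
ring.
Qed.
Lemma sum7nz (F : 'I_7 -> K) : \sum_(k < 7 | k != iz) F k = \sum_(a<3) (F (iS a) + F (iT a)).
Proof.
rewrite big_mkcond sum7 eqxx /= add0r; apply: eq_bigr => a _.
by rewrite eqSz eqTz.
Qed.

Lemma sum_delta3 (F : 'I_3 -> K) a : \sum_(b < 3) (a == b)%:R * F b = F a.
Proof.
rewrite (bigD1 a) //= eqxx mul1r big1 ?addr0 // => b hb.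
by rewrite eq_sym (negbTE hb) mul0r.
Qed.
Lemma Z_S a y : Zhat A B (iS a) y = A a (y iz).
Proof.
rewrite /Zhat -(sum_delta3 (fun b => A b (y iz)) a); apply: eq_bigr => b _.
by rewrite eqSS eqST mul0r addr0.
Qed.
Lemma Z_T a y : Zhat A B (iT a) y = B a (y iz).
Proof.
rewrite /Zhat -(sum_delta3 (fun b => B b (y iz)) a); apply: eq_bigr => b _.
by rewrite eqTT eqTS mul0r add0r.
Qed.
Lemma Z_z y : Zhat A B iz y = 0.
Proof. by rewrite /Zhat big1 // => b _; rewrite eqzS eqzT !mul0r addr0. Qed.
Lemma Cfr_S z a : Cfr z (e (iS a)) = B a z.
Proof.
rewrite /Cfr /e -(sum_delta3 (fun b => B b z) a); apply: eq_bigr => b _.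
by rewrite eqSS eqTS mulr0 addr0 eq_sym mulrC.
Qed.
Lemma Cfr_T z a : Cfr z (e (iT a)) = A a z.
Proof.
rewrite /Cfr /e -(sum_delta3 (fun b => A b z) a); apply: eq_bigr => b _.
by rewrite eqTT eqST mulr0 add0r eq_sym mulrC.
Qed.


Lemma ord6 (i : 'I_7) : i != iz ->
  i = iS a0 \/ i = iS a1 \/ i = iS a2 \/ i = iT a0 \/ i = iT a1 \/ i = iT a2.
Proof.
case: (ord7 i) => [->|[a [->|->]]]; first by rewrite eqxx.
- by case: (ord3 a) => [->|[->|->]] _; tauto.
- by case: (ord3 a) => [->|[->|->]] _; tauto.
Qed.
Lemma lin1 {p q : K} : p = 0 -> q = p -> q = 0. Proof. by move=> -> ->. Qed.
Lemma lin1n {p q : K} : p = 0 -> q = - p -> q = 0. Proof. by move=> -> ->; rewrite oppr0. Qed.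
Ltac csimp := rewrite /Pz /Qbv /Pbv /P0 /Palpha /bv_add /bv_scale ?sum3 ?nx0 ?nx1 ?nx2 ?nx0 /ewedge ?eqSS ?eqTT ?eqST ?eqTS ?eqxx ?a01 ?a02 ?a10 ?a12 ?a20 ?a21 /=.
Definition Cons (p0 p1 p2 q0 q1 q2 w0 w1 w2 : K) : Prop :=
  p0 ^+ 2 + w1 * q2 ^+ 2 + w2 * q1 ^+ 2 = 0 /\
  p1 ^+ 2 + w2 * q0 ^+ 2 + w0 * q2 ^+ 2 = 0 /\
  p2 ^+ 2 + w0 * q1 ^+ 2 + w1 * q0 ^+ 2 = 0 /\
  w0 * p0 * q1 - w1 * p1 * q0 = 0 /\
  w1 * p1 * q2 - w2 * p2 * q1 = 0 /\
  w2 * p2 * q0 - w0 * p0 * q2 = 0 /\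
  p0 * p1 - w2 * q0 * q1 = 0 /\
  p1 * p2 - w0 * q1 * q2 = 0 /\
  p2 * p0 - w1 * q2 * q0 = 0 /\
  w0 * p0 ^+ 2 + w1 * p1 ^+ 2 + w2 * p2 ^+ 2 = 0.

Lemma csAB {p0 p1 p2 q0 q1 q2 w0 w1 w2 : K} : Cons p0 p1 p2 q0 q1 q2 w0 w1 w2 -> p0 * q0 + p1 * q1 + p2 * q2 = 0.
Proof.
move=> [g1_0 [g1_1 [g1_2 [g2_0 [g2_1 [g2_2 [g3_0 [g3_1 [g3_2 g4]]]]]]]]].
have h : (p0 * q0 + p1 * q1 + p2 * q2) ^+ 2 = q0 ^+ 2 * (p0 ^+ 2 + w1 * q2 ^+ 2 + w2 * q1 ^+ 2) + q1 ^+ 2 * (p1 ^+ 2 + w2 * q0 ^+ 2 + w0 * q2 ^+ 2) + q2 ^+ 2 * (p2 ^+ 2 + w0 * q1 ^+ 2 + w1 * q0 ^+ 2)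
   + 2 * q0 * q1 * (p0 * p1 - w2 * q0 * q1) + 2 * q1 * q2 * (p1 * p2 - w0 * q1 * q2) + 2 * q0 * q2 * (p2 * p0 - w1 * q2 * q0) by ring.
move: h; rewrite g1_0 g1_1 g1_2 g3_0 g3_1 g3_2 !mulr0 !addr0 => /eqP.
by rewrite expf_eq0 /= => /eqP.
Qed.

Lemma cF1_012 {p0 p1 p2 q0 q1 q2 w0 w1 w2 : K} : Cons p0 p1 p2 q0 q1 q2 w0 w1 w2 -> p0 * q0 + p1 * q1 + p2 * q2 = 0 -> (p2 ^+ 2 * w2 + p1 ^+ 2 * w1 + p0 ^+ 2 * w0) = 0.
Proof.
move=> [g1_0 [g1_1 [g1_2 [g2_0 [g2_1 [g2_2 [g3_0 [g3_1 [g3_2 g4]]]]]]]]] hs .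
transitivity ((1) * (w0 * p0 ^+ 2 + w1 * p1 ^+ 2 + w2 * p2 ^+ 2)); first ring.
by rewrite g4; ring.
Qed.

Lemma cF1_013 {p0 p1 p2 q0 q1 q2 w0 w1 w2 : K} : Cons p0 p1 p2 q0 q1 q2 w0 w1 w2 -> p0 * q0 + p1 * q1 + p2 * q2 = 0 -> (p2 * q0 * w2 - p0 * q2 * w0) = 0.
Proof.
move=> [g1_0 [g1_1 [g1_2 [g2_0 [g2_1 [g2_2 [g3_0 [g3_1 [g3_2 g4]]]]]]]]] hs .
transitivity ((1) * (w2 * p2 * q0 - w0 * p0 * q2)); first ring.
by rewrite g2_2; ring.
Qed.

Lemma cF1_014 {p0 p1 p2 q0 q1 q2 w0 w1 w2 : K} : Cons p0 p1 p2 q0 q1 q2 w0 w1 w2 -> p0 * q0 + p1 * q1 + p2 * q2 = 0 -> (p2 * q1 * w2 - p1 * q2 * w1) = 0.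
Proof.
move=> [g1_0 [g1_1 [g1_2 [g2_0 [g2_1 [g2_2 [g3_0 [g3_1 [g3_2 g4]]]]]]]]] hs .
transitivity ((- (1)) * (w1 * p1 * q2 - w2 * p2 * q1)); first ring.
by rewrite g2_1; ring.
Qed.

Lemma cF1_015 {p0 p1 p2 q0 q1 q2 w0 w1 w2 : K} : Cons p0 p1 p2 q0 q1 q2 w0 w1 w2 -> p0 * q0 + p1 * q1 + p2 * q2 = 0 -> (p2 * q2 * w2 + p1 * q1 * w2 + p0 * q0 * w2) = 0.
Proof.
move=> [g1_0 [g1_1 [g1_2 [g2_0 [g2_1 [g2_2 [g3_0 [g3_1 [g3_2 g4]]]]]]]]] hs .
transitivity ((w2) * (p0 * q0 + p1 * q1 + p2 * q2)); first ring.
by rewrite hs; ring.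
Qed.

Lemma cF1_023 {p0 p1 p2 q0 q1 q2 w0 w1 w2 : K} : Cons p0 p1 p2 q0 q1 q2 w0 w1 w2 -> p0 * q0 + p1 * q1 + p2 * q2 = 0 -> (- (p1 * q0 * w1) + p0 * q1 * w0) = 0.
Proof.
move=> [g1_0 [g1_1 [g1_2 [g2_0 [g2_1 [g2_2 [g3_0 [g3_1 [g3_2 g4]]]]]]]]] hs .
transitivity ((1) * (w0 * p0 * q1 - w1 * p1 * q0)); first ring.
by rewrite g2_0; ring.
Qed.

Lemma cF1_024 {p0 p1 p2 q0 q1 q2 w0 w1 w2 : K} : Cons p0 p1 p2 q0 q1 q2 w0 w1 w2 -> p0 * q0 + p1 * q1 + p2 * q2 = 0 -> (- (p2 * q2 * w1) - p1 * q1 * w1 - p0 * q0 * w1) = 0.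
Proof.
move=> [g1_0 [g1_1 [g1_2 [g2_0 [g2_1 [g2_2 [g3_0 [g3_1 [g3_2 g4]]]]]]]]] hs .
transitivity ((- (w1)) * (p0 * q0 + p1 * q1 + p2 * q2)); first ring.
by rewrite hs; ring.
Qed.

Lemma cF1_025 {p0 p1 p2 q0 q1 q2 w0 w1 w2 : K} : Cons p0 p1 p2 q0 q1 q2 w0 w1 w2 -> p0 * q0 + p1 * q1 + p2 * q2 = 0 -> (p2 * q1 * w2 - p1 * q2 * w1) = 0.
Proof.
move=> [g1_0 [g1_1 [g1_2 [g2_0 [g2_1 [g2_2 [g3_0 [g3_1 [g3_2 g4]]]]]]]]] hs .
transitivity ((- (1)) * (w1 * p1 * q2 - w2 * p2 * q1)); first ring.
by rewrite g2_1; ring.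
Qed.

Lemma cF1_034 {p0 p1 p2 q0 q1 q2 w0 w1 w2 : K} : Cons p0 p1 p2 q0 q1 q2 w0 w1 w2 -> p0 * q0 + p1 * q1 + p2 * q2 = 0 -> (- (q0 * q2 * w1) + p0 * p2) = 0.
Proof.
move=> [g1_0 [g1_1 [g1_2 [g2_0 [g2_1 [g2_2 [g3_0 [g3_1 [g3_2 g4]]]]]]]]] hs .
transitivity ((1) * (p2 * p0 - w1 * q2 * q0)); first ring.
by rewrite g3_2; ring.
Qed.

Lemma cF1_035 {p0 p1 p2 q0 q1 q2 w0 w1 w2 : K} : Cons p0 p1 p2 q0 q1 q2 w0 w1 w2 -> p0 * q0 + p1 * q1 + p2 * q2 = 0 -> (q0 * q1 * w2 - p0 * p1) = 0.
Proof.
move=> [g1_0 [g1_1 [g1_2 [g2_0 [g2_1 [g2_2 [g3_0 [g3_1 [g3_2 g4]]]]]]]]] hs .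
transitivity ((- (1)) * (p0 * p1 - w2 * q0 * q1)); first ring.
by rewrite g3_0; ring.
Qed.

Lemma cF1_045 {p0 p1 p2 q0 q1 q2 w0 w1 w2 : K} : Cons p0 p1 p2 q0 q1 q2 w0 w1 w2 -> p0 * q0 + p1 * q1 + p2 * q2 = 0 -> (q2 ^+ 2 * w1 + q1 ^+ 2 * w2 + p0 ^+ 2) = 0.
Proof.
move=> [g1_0 [g1_1 [g1_2 [g2_0 [g2_1 [g2_2 [g3_0 [g3_1 [g3_2 g4]]]]]]]]] hs .
transitivity ((1) * (p0 ^+ 2 + w1 * q2 ^+ 2 + w2 * q1 ^+ 2)); first ring.
by rewrite g1_0; ring.
Qed.

Lemma cF1_123 {p0 p1 p2 q0 q1 q2 w0 w1 w2 : K} : Cons p0 p1 p2 q0 q1 q2 w0 w1 w2 -> p0 * q0 + p1 * q1 + p2 * q2 = 0 -> (p2 * q2 * w0 + p1 * q1 * w0 + p0 * q0 * w0) = 0.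
Proof.
move=> [g1_0 [g1_1 [g1_2 [g2_0 [g2_1 [g2_2 [g3_0 [g3_1 [g3_2 g4]]]]]]]]] hs .
transitivity ((w0) * (p0 * q0 + p1 * q1 + p2 * q2)); first ring.
by rewrite hs; ring.
Qed.

Lemma cF1_124 {p0 p1 p2 q0 q1 q2 w0 w1 w2 : K} : Cons p0 p1 p2 q0 q1 q2 w0 w1 w2 -> p0 * q0 + p1 * q1 + p2 * q2 = 0 -> (- (p1 * q0 * w1) + p0 * q1 * w0) = 0.
Proof.
move=> [g1_0 [g1_1 [g1_2 [g2_0 [g2_1 [g2_2 [g3_0 [g3_1 [g3_2 g4]]]]]]]]] hs .
transitivity ((1) * (w0 * p0 * q1 - w1 * p1 * q0)); first ring.
by rewrite g2_0; ring.
Qed.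

Lemma cF1_125 {p0 p1 p2 q0 q1 q2 w0 w1 w2 : K} : Cons p0 p1 p2 q0 q1 q2 w0 w1 w2 -> p0 * q0 + p1 * q1 + p2 * q2 = 0 -> (- (p2 * q0 * w2) + p0 * q2 * w0) = 0.
Proof.
move=> [g1_0 [g1_1 [g1_2 [g2_0 [g2_1 [g2_2 [g3_0 [g3_1 [g3_2 g4]]]]]]]]] hs .
transitivity ((- (1)) * (w2 * p2 * q0 - w0 * p0 * q2)); first ring.
by rewrite g2_2; ring.
Qed.

Lemma cF1_134 {p0 p1 p2 q0 q1 q2 w0 w1 w2 : K} : Cons p0 p1 p2 q0 q1 q2 w0 w1 w2 -> p0 * q0 + p1 * q1 + p2 * q2 = 0 -> (- (q1 * q2 * w0) + p1 * p2) = 0.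
Proof.
move=> [g1_0 [g1_1 [g1_2 [g2_0 [g2_1 [g2_2 [g3_0 [g3_1 [g3_2 g4]]]]]]]]] hs .
transitivity ((1) * (p1 * p2 - w0 * q1 * q2)); first ring.
by rewrite g3_1; ring.
Qed.

Lemma cF1_135 {p0 p1 p2 q0 q1 q2 w0 w1 w2 : K} : Cons p0 p1 p2 q0 q1 q2 w0 w1 w2 -> p0 * q0 + p1 * q1 + p2 * q2 = 0 -> (- (q2 ^+ 2 * w0) - q0 ^+ 2 * w2 - p1 ^+ 2) = 0.
Proof.
move=> [g1_0 [g1_1 [g1_2 [g2_0 [g2_1 [g2_2 [g3_0 [g3_1 [g3_2 g4]]]]]]]]] hs .
transitivity ((- (1)) * (p1 ^+ 2 + w2 * q0 ^+ 2 + w0 * q2 ^+ 2)); first ring.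
by rewrite g1_1; ring.
Qed.

Lemma cF1_145 {p0 p1 p2 q0 q1 q2 w0 w1 w2 : K} : Cons p0 p1 p2 q0 q1 q2 w0 w1 w2 -> p0 * q0 + p1 * q1 + p2 * q2 = 0 -> (- (q0 * q1 * w2) + p0 * p1) = 0.
Proof.
move=> [g1_0 [g1_1 [g1_2 [g2_0 [g2_1 [g2_2 [g3_0 [g3_1 [g3_2 g4]]]]]]]]] hs .
transitivity ((1) * (p0 * p1 - w2 * q0 * q1)); first ring.
by rewrite g3_0; ring.
Qed.

Lemma cF1_234 {p0 p1 p2 q0 q1 q2 w0 w1 w2 : K} : Cons p0 p1 p2 q0 q1 q2 w0 w1 w2 -> p0 * q0 + p1 * q1 + p2 * q2 = 0 -> (q1 ^+ 2 * w0 + q0 ^+ 2 * w1 + p2 ^+ 2) = 0.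
Proof.
move=> [g1_0 [g1_1 [g1_2 [g2_0 [g2_1 [g2_2 [g3_0 [g3_1 [g3_2 g4]]]]]]]]] hs .
transitivity ((1) * (p2 ^+ 2 + w0 * q1 ^+ 2 + w1 * q0 ^+ 2)); first ring.
by rewrite g1_2; ring.
Qed.

Lemma cF1_235 {p0 p1 p2 q0 q1 q2 w0 w1 w2 : K} : Cons p0 p1 p2 q0 q1 q2 w0 w1 w2 -> p0 * q0 + p1 * q1 + p2 * q2 = 0 -> (q1 * q2 * w0 - p1 * p2) = 0.
Proof.
move=> [g1_0 [g1_1 [g1_2 [g2_0 [g2_1 [g2_2 [g3_0 [g3_1 [g3_2 g4]]]]]]]]] hs .
transitivity ((- (1)) * (p1 * p2 - w0 * q1 * q2)); first ring.
by rewrite g3_1; ring.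
Qed.

Lemma cF1_245 {p0 p1 p2 q0 q1 q2 w0 w1 w2 : K} : Cons p0 p1 p2 q0 q1 q2 w0 w1 w2 -> p0 * q0 + p1 * q1 + p2 * q2 = 0 -> (- (q0 * q2 * w1) + p0 * p2) = 0.
Proof.
move=> [g1_0 [g1_1 [g1_2 [g2_0 [g2_1 [g2_2 [g3_0 [g3_1 [g3_2 g4]]]]]]]]] hs .
transitivity ((1) * (p2 * p0 - w1 * q2 * q0)); first ring.
by rewrite g3_2; ring.
Qed.

Lemma cF1_345 {p0 p1 p2 q0 q1 q2 w0 w1 w2 : K} : Cons p0 p1 p2 q0 q1 q2 w0 w1 w2 -> p0 * q0 + p1 * q1 + p2 * q2 = 0 -> (p2 * q2 + p1 * q1 + p0 * q0) = 0.
Proof.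
move=> [g1_0 [g1_1 [g1_2 [g2_0 [g2_1 [g2_2 [g3_0 [g3_1 [g3_2 g4]]]]]]]]] hs .
transitivity ((1) * (p0 * q0 + p1 * q1 + p2 * q2)); first ring.
by rewrite hs; ring.
Qed.

Lemma cF2_01 {p0 p1 p2 q0 q1 q2 w0 w1 w2 s0 s1 s2 t0 t1 t2 : K} : Cons p0 p1 p2 q0 q1 q2 w0 w1 w2 -> p0 * q0 + p1 * q1 + p2 * q2 = 0 -> (q0 * s0 + p0 * t0) + (q1 * s1 + p1 * t1) + (q2 * s2 + p2 * t2) = 0 -> (p1 * q2 * w1 * s1 - p1 * q1 * w2 * s2 + p1 * p2 * w2 * t1 - p1 ^+ 2 * w1 * t2 + p0 * q2 * w0 * s0 - p0 * q0 * w2 * s2 + p0 * p2 * w2 * t0 - p0 ^+ 2 * w0 * t2) = 0.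
Proof.
move=> [g1_0 [g1_1 [g1_2 [g2_0 [g2_1 [g2_2 [g3_0 [g3_1 [g3_2 g4]]]]]]]]] hs hC.
transitivity ((s1) * (w1 * p1 * q2 - w2 * p2 * q1) + (- (s0)) * (w2 * p2 * q0 - w0 * p0 * q2) + (- (t2)) * (w0 * p0 ^+ 2 + w1 * p1 ^+ 2 + w2 * p2 ^+ 2) + (- (w2 * s2)) * (p0 * q0 + p1 * q1 + p2 * q2) + (p2 * w2) * ((q0 * s0 + p0 * t0) + (q1 * s1 + p1 * t1) + (q2 * s2 + p2 * t2))); first ring.
by rewrite g2_1 g2_2 g4 hs hC; ring.
Qed.

Lemma cF2_02 {p0 p1 p2 q0 q1 q2 w0 w1 w2 s0 s1 s2 t0 t1 t2 : K} : Cons p0 p1 p2 q0 q1 q2 w0 w1 w2 -> p0 * q0 + p1 * q1 + p2 * q2 = 0 -> (q0 * s0 + p0 * t0) + (q1 * s1 + p1 * t1) + (q2 * s2 + p2 * t2) = 0 -> (p2 * q2 * w1 * s1 - p2 * q1 * w2 * s2 + p2 ^+ 2 * w2 * t1 - p1 * p2 * w1 * t2 - p0 * q1 * w0 * s0 + p0 * q0 * w1 * s1 - p0 * p1 * w1 * t0 + p0 ^+ 2 * w0 * t1) = 0.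
Proof.
move=> [g1_0 [g1_1 [g1_2 [g2_0 [g2_1 [g2_2 [g3_0 [g3_1 [g3_2 g4]]]]]]]]] hs hC.
transitivity ((- (s0)) * (w0 * p0 * q1 - w1 * p1 * q0) + (s2) * (w1 * p1 * q2 - w2 * p2 * q1) + (t1) * (w0 * p0 ^+ 2 + w1 * p1 ^+ 2 + w2 * p2 ^+ 2) + (w1 * s1) * (p0 * q0 + p1 * q1 + p2 * q2) + (- (p1 * w1)) * ((q0 * s0 + p0 * t0) + (q1 * s1 + p1 * t1) + (q2 * s2 + p2 * t2))); first ring.
by rewrite g2_0 g2_1 g4 hs hC; ring.
Qed.

Lemma cF2_03 {p0 p1 p2 q0 q1 q2 w0 w1 w2 s0 s1 s2 t0 t1 t2 : K} : Cons p0 p1 p2 q0 q1 q2 w0 w1 w2 -> p0 * q0 + p1 * q1 + p2 * q2 = 0 -> (q0 * s0 + p0 * t0) + (q1 * s1 + p1 * t1) + (q2 * s2 + p2 * t2) = 0 -> (q0 * q2 * w1 * s1 - q0 * q1 * w2 * s2 + p2 * q0 * w2 * t1 - p1 * q0 * w1 * t2 - p0 * q2 * w0 * t1 + p0 * q1 * w0 * t2 - p0 * p2 * s1 + p0 * p1 * s2) = 0.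
Proof.
move=> [g1_0 [g1_1 [g1_2 [g2_0 [g2_1 [g2_2 [g3_0 [g3_1 [g3_2 g4]]]]]]]]] hs hC.
transitivity ((t2) * (w0 * p0 * q1 - w1 * p1 * q0) + (t1) * (w2 * p2 * q0 - w0 * p0 * q2) + (s2) * (p0 * p1 - w2 * q0 * q1) + (- (s1)) * (p2 * p0 - w1 * q2 * q0)); first ring.
by rewrite g2_0 g2_2 g3_0 g3_2; ring.
Qed.

Lemma cF2_04 {p0 p1 p2 q0 q1 q2 w0 w1 w2 s0 s1 s2 t0 t1 t2 : K} : Cons p0 p1 p2 q0 q1 q2 w0 w1 w2 -> p0 * q0 + p1 * q1 + p2 * q2 = 0 -> (q0 * s0 + p0 * t0) + (q1 * s1 + p1 * t1) + (q2 * s2 + p2 * t2) = 0 -> (q1 * q2 * w1 * s1 - q1 ^+ 2 * w2 * s2 + p2 * q1 * w2 * t1 - p1 * q1 * w1 * t2 + p0 * q2 * w1 * t0 - p0 * q0 * w1 * t2 + p0 * p2 * s0 - p0 ^+ 2 * s2) = 0.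
Proof.
move=> [g1_0 [g1_1 [g1_2 [g2_0 [g2_1 [g2_2 [g3_0 [g3_1 [g3_2 g4]]]]]]]]] hs hC.
transitivity ((- (s2)) * (p0 ^+ 2 + w1 * q2 ^+ 2 + w2 * q1 ^+ 2) + (- (t1)) * (w1 * p1 * q2 - w2 * p2 * q1) + (s0) * (p2 * p0 - w1 * q2 * q0) + (- (w1 * t2)) * (p0 * q0 + p1 * q1 + p2 * q2) + (q2 * w1) * ((q0 * s0 + p0 * t0) + (q1 * s1 + p1 * t1) + (q2 * s2 + p2 * t2))); first ring.
by rewrite g1_0 g2_1 g3_2 hs hC; ring.
Qed.

Lemma cF2_05 {p0 p1 p2 q0 q1 q2 w0 w1 w2 s0 s1 s2 t0 t1 t2 : K} : Cons p0 p1 p2 q0 q1 q2 w0 w1 w2 -> p0 * q0 + p1 * q1 + p2 * q2 = 0 -> (q0 * s0 + p0 * t0) + (q1 * s1 + p1 * t1) + (q2 * s2 + p2 * t2) = 0 -> (q2 ^+ 2 * w1 * s1 - q1 * q2 * w2 * s2 + p2 * q2 * w2 * t1 - p1 * q2 * w1 * t2 - p0 * q1 * w2 * t0 + p0 * q0 * w2 * t1 - p0 * p1 * s0 + p0 ^+ 2 * s1) = 0.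
Proof.
move=> [g1_0 [g1_1 [g1_2 [g2_0 [g2_1 [g2_2 [g3_0 [g3_1 [g3_2 g4]]]]]]]]] hs hC.
transitivity ((s1) * (p0 ^+ 2 + w1 * q2 ^+ 2 + w2 * q1 ^+ 2) + (- (t2)) * (w1 * p1 * q2 - w2 * p2 * q1) + (- (s0)) * (p0 * p1 - w2 * q0 * q1) + (w2 * t1) * (p0 * q0 + p1 * q1 + p2 * q2) + (- (q1 * w2)) * ((q0 * s0 + p0 * t0) + (q1 * s1 + p1 * t1) + (q2 * s2 + p2 * t2))); first ring.
by rewrite g1_0 g2_1 g3_0 hs hC; ring.
Qed.

Lemma cF2_12 {p0 p1 p2 q0 q1 q2 w0 w1 w2 s0 s1 s2 t0 t1 t2 : K} : Cons p0 p1 p2 q0 q1 q2 w0 w1 w2 -> p0 * q0 + p1 * q1 + p2 * q2 = 0 -> (q0 * s0 + p0 * t0) + (q1 * s1 + p1 * t1) + (q2 * s2 + p2 * t2) = 0 -> (- (p2 * q2 * w0 * s0) + p2 * q0 * w2 * s2 - p2 ^+ 2 * w2 * t0 - p1 * q1 * w0 * s0 + p1 * q0 * w1 * s1 - p1 ^+ 2 * w1 * t0 + p0 * p2 * w0 * t2 + p0 * p1 * w0 * t1) = 0.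
Proof.
move=> [g1_0 [g1_1 [g1_2 [g2_0 [g2_1 [g2_2 [g3_0 [g3_1 [g3_2 g4]]]]]]]]] hs hC.
transitivity ((- (s1)) * (w0 * p0 * q1 - w1 * p1 * q0) + (s2) * (w2 * p2 * q0 - w0 * p0 * q2) + (- (t0)) * (w0 * p0 ^+ 2 + w1 * p1 ^+ 2 + w2 * p2 ^+ 2) + (- (w0 * s0)) * (p0 * q0 + p1 * q1 + p2 * q2) + (p0 * w0) * ((q0 * s0 + p0 * t0) + (q1 * s1 + p1 * t1) + (q2 * s2 + p2 * t2))); first ring.
by rewrite g2_0 g2_2 g4 hs hC; ring.
Qed.

Lemma cF2_13 {p0 p1 p2 q0 q1 q2 w0 w1 w2 s0 s1 s2 t0 t1 t2 : K} : Cons p0 p1 p2 q0 q1 q2 w0 w1 w2 -> p0 * q0 + p1 * q1 + p2 * q2 = 0 -> (q0 * s0 + p0 * t0) + (q1 * s1 + p1 * t1) + (q2 * s2 + p2 * t2) = 0 -> (- (q0 * q2 * w0 * s0) + q0 ^+ 2 * w2 * s2 - p2 * q0 * w2 * t0 - p1 * q2 * w0 * t1 + p1 * q1 * w0 * t2 - p1 * p2 * s1 + p1 ^+ 2 * s2 + p0 * q0 * w0 * t2) = 0.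
Proof.
move=> [g1_0 [g1_1 [g1_2 [g2_0 [g2_1 [g2_2 [g3_0 [g3_1 [g3_2 g4]]]]]]]]] hs hC.
transitivity ((s2) * (p1 ^+ 2 + w2 * q0 ^+ 2 + w0 * q2 ^+ 2) + (- (t0)) * (w2 * p2 * q0 - w0 * p0 * q2) + (- (s1)) * (p1 * p2 - w0 * q1 * q2) + (w0 * t2) * (p0 * q0 + p1 * q1 + p2 * q2) + (- (q2 * w0)) * ((q0 * s0 + p0 * t0) + (q1 * s1 + p1 * t1) + (q2 * s2 + p2 * t2))); first ring.
by rewrite g1_1 g2_2 g3_1 hs hC; ring.
Qed.

Lemma cF2_14 {p0 p1 p2 q0 q1 q2 w0 w1 w2 s0 s1 s2 t0 t1 t2 : K} : Cons p0 p1 p2 q0 q1 q2 w0 w1 w2 -> p0 * q0 + p1 * q1 + p2 * q2 = 0 -> (q0 * s0 + p0 * t0) + (q1 * s1 + p1 * t1) + (q2 * s2 + p2 * t2) = 0 -> (- (q1 * q2 * w0 * s0) + q0 * q1 * w2 * s2 - p2 * q1 * w2 * t0 + p1 * q2 * w1 * t0 - p1 * q0 * w1 * t2 + p1 * p2 * s0 + p0 * q1 * w0 * t2 - p0 * p1 * s2) = 0.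
Proof.
move=> [g1_0 [g1_1 [g1_2 [g2_0 [g2_1 [g2_2 [g3_0 [g3_1 [g3_2 g4]]]]]]]]] hs hC.
transitivity ((t2) * (w0 * p0 * q1 - w1 * p1 * q0) + (t0) * (w1 * p1 * q2 - w2 * p2 * q1) + (- (s2)) * (p0 * p1 - w2 * q0 * q1) + (s0) * (p1 * p2 - w0 * q1 * q2)); first ring.
by rewrite g2_0 g2_1 g3_0 g3_1; ring.
Qed.

Lemma cF2_15 {p0 p1 p2 q0 q1 q2 w0 w1 w2 s0 s1 s2 t0 t1 t2 : K} : Cons p0 p1 p2 q0 q1 q2 w0 w1 w2 -> p0 * q0 + p1 * q1 + p2 * q2 = 0 -> (q0 * s0 + p0 * t0) + (q1 * s1 + p1 * t1) + (q2 * s2 + p2 * t2) = 0 -> (- (q2 ^+ 2 * w0 * s0) + q0 * q2 * w2 * s2 - p2 * q2 * w2 * t0 - p1 * q1 * w2 * t0 + p1 * q0 * w2 * t1 - p1 ^+ 2 * s0 + p0 * q2 * w0 * t2 + p0 * p1 * s1) = 0.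
Proof.
move=> [g1_0 [g1_1 [g1_2 [g2_0 [g2_1 [g2_2 [g3_0 [g3_1 [g3_2 g4]]]]]]]]] hs hC.
transitivity ((- (s0)) * (p1 ^+ 2 + w2 * q0 ^+ 2 + w0 * q2 ^+ 2) + (- (t2)) * (w2 * p2 * q0 - w0 * p0 * q2) + (s1) * (p0 * p1 - w2 * q0 * q1) + (- (w2 * t0)) * (p0 * q0 + p1 * q1 + p2 * q2) + (q0 * w2) * ((q0 * s0 + p0 * t0) + (q1 * s1 + p1 * t1) + (q2 * s2 + p2 * t2))); first ring.
by rewrite g1_1 g2_2 g3_0 hs hC; ring.
Qed.

Lemma cF2_23 {p0 p1 p2 q0 q1 q2 w0 w1 w2 s0 s1 s2 t0 t1 t2 : K} : Cons p0 p1 p2 q0 q1 q2 w0 w1 w2 -> p0 * q0 + p1 * q1 + p2 * q2 = 0 -> (q0 * s0 + p0 * t0) + (q1 * s1 + p1 * t1) + (q2 * s2 + p2 * t2) = 0 -> (q0 * q1 * w0 * s0 - q0 ^+ 2 * w1 * s1 - p2 * q2 * w0 * t1 + p2 * q1 * w0 * t2 - p2 ^+ 2 * s1 + p1 * q0 * w1 * t0 + p1 * p2 * s2 - p0 * q0 * w0 * t1) = 0.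
Proof.
move=> [g1_0 [g1_1 [g1_2 [g2_0 [g2_1 [g2_2 [g3_0 [g3_1 [g3_2 g4]]]]]]]]] hs hC.
transitivity ((- (s1)) * (p2 ^+ 2 + w0 * q1 ^+ 2 + w1 * q0 ^+ 2) + (- (t0)) * (w0 * p0 * q1 - w1 * p1 * q0) + (s2) * (p1 * p2 - w0 * q1 * q2) + (- (w0 * t1)) * (p0 * q0 + p1 * q1 + p2 * q2) + (q1 * w0) * ((q0 * s0 + p0 * t0) + (q1 * s1 + p1 * t1) + (q2 * s2 + p2 * t2))); first ring.
by rewrite g1_2 g2_0 g3_1 hs hC; ring.
Qed.

Lemma cF2_24 {p0 p1 p2 q0 q1 q2 w0 w1 w2 s0 s1 s2 t0 t1 t2 : K} : Cons p0 p1 p2 q0 q1 q2 w0 w1 w2 -> p0 * q0 + p1 * q1 + p2 * q2 = 0 -> (q0 * s0 + p0 * t0) + (q1 * s1 + p1 * t1) + (q2 * s2 + p2 * t2) = 0 -> (q1 ^+ 2 * w0 * s0 - q0 * q1 * w1 * s1 + p2 * q2 * w1 * t0 - p2 * q0 * w1 * t2 + p2 ^+ 2 * s0 + p1 * q1 * w1 * t0 - p0 * q1 * w0 * t1 - p0 * p2 * s2) = 0.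
Proof.
move=> [g1_0 [g1_1 [g1_2 [g2_0 [g2_1 [g2_2 [g3_0 [g3_1 [g3_2 g4]]]]]]]]] hs hC.
transitivity ((s0) * (p2 ^+ 2 + w0 * q1 ^+ 2 + w1 * q0 ^+ 2) + (- (t1)) * (w0 * p0 * q1 - w1 * p1 * q0) + (- (s2)) * (p2 * p0 - w1 * q2 * q0) + (w1 * t0) * (p0 * q0 + p1 * q1 + p2 * q2) + (- (q0 * w1)) * ((q0 * s0 + p0 * t0) + (q1 * s1 + p1 * t1) + (q2 * s2 + p2 * t2))); first ring.
by rewrite g1_2 g2_0 g3_2 hs hC; ring.
Qed.

Lemma cF2_25 {p0 p1 p2 q0 q1 q2 w0 w1 w2 s0 s1 s2 t0 t1 t2 : K} : Cons p0 p1 p2 q0 q1 q2 w0 w1 w2 -> p0 * q0 + p1 * q1 + p2 * q2 = 0 -> (q0 * s0 + p0 * t0) + (q1 * s1 + p1 * t1) + (q2 * s2 + p2 * t2) = 0 -> (q1 * q2 * w0 * s0 - q0 * q2 * w1 * s1 - p2 * q1 * w2 * t0 + p2 * q0 * w2 * t1 + p1 * q2 * w1 * t0 - p1 * p2 * s0 - p0 * q2 * w0 * t1 + p0 * p2 * s1) = 0.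
Proof.
move=> [g1_0 [g1_1 [g1_2 [g2_0 [g2_1 [g2_2 [g3_0 [g3_1 [g3_2 g4]]]]]]]]] hs hC.
transitivity ((t0) * (w1 * p1 * q2 - w2 * p2 * q1) + (t1) * (w2 * p2 * q0 - w0 * p0 * q2) + (- (s0)) * (p1 * p2 - w0 * q1 * q2) + (s1) * (p2 * p0 - w1 * q2 * q0)); first ring.
by rewrite g2_1 g2_2 g3_1 g3_2; ring.
Qed.

Lemma cF2_34 {p0 p1 p2 q0 q1 q2 w0 w1 w2 s0 s1 s2 t0 t1 t2 : K} : Cons p0 p1 p2 q0 q1 q2 w0 w1 w2 -> p0 * q0 + p1 * q1 + p2 * q2 = 0 -> (q0 * s0 + p0 * t0) + (q1 * s1 + p1 * t1) + (q2 * s2 + p2 * t2) = 0 -> (q1 * q2 * w0 * t1 - q1 ^+ 2 * w0 * t2 + q0 * q2 * w1 * t0 - q0 ^+ 2 * w1 * t2 + p2 * q1 * s1 + p2 * q0 * s0 - p1 * q1 * s2 - p0 * q0 * s2) = 0.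
Proof.
move=> [g1_0 [g1_1 [g1_2 [g2_0 [g2_1 [g2_2 [g3_0 [g3_1 [g3_2 g4]]]]]]]]] hs hC.
transitivity ((- (t2)) * (p2 ^+ 2 + w0 * q1 ^+ 2 + w1 * q0 ^+ 2) + (- (t1)) * (p1 * p2 - w0 * q1 * q2) + (- (t0)) * (p2 * p0 - w1 * q2 * q0) + (- (s2)) * (p0 * q0 + p1 * q1 + p2 * q2) + (p2) * ((q0 * s0 + p0 * t0) + (q1 * s1 + p1 * t1) + (q2 * s2 + p2 * t2))); first ring.
by rewrite g1_2 g3_1 g3_2 hs hC; ring.
Qed.

Lemma cF2_35 {p0 p1 p2 q0 q1 q2 w0 w1 w2 s0 s1 s2 t0 t1 t2 : K} : Cons p0 p1 p2 q0 q1 q2 w0 w1 w2 -> p0 * q0 + p1 * q1 + p2 * q2 = 0 -> (q0 * s0 + p0 * t0) + (q1 * s1 + p1 * t1) + (q2 * s2 + p2 * t2) = 0 -> (q2 ^+ 2 * w0 * t1 - q1 * q2 * w0 * t2 - q0 * q1 * w2 * t0 + q0 ^+ 2 * w2 * t1 + p2 * q2 * s1 - p1 * q2 * s2 - p1 * q0 * s0 + p0 * q0 * s1) = 0.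
Proof.
move=> [g1_0 [g1_1 [g1_2 [g2_0 [g2_1 [g2_2 [g3_0 [g3_1 [g3_2 g4]]]]]]]]] hs hC.
transitivity ((t1) * (p1 ^+ 2 + w2 * q0 ^+ 2 + w0 * q2 ^+ 2) + (t0) * (p0 * p1 - w2 * q0 * q1) + (t2) * (p1 * p2 - w0 * q1 * q2) + (s1) * (p0 * q0 + p1 * q1 + p2 * q2) + (- (p1)) * ((q0 * s0 + p0 * t0) + (q1 * s1 + p1 * t1) + (q2 * s2 + p2 * t2))); first ring.
by rewrite g1_1 g3_0 g3_1 hs hC; ring.
Qed.

Lemma cF2_45 {p0 p1 p2 q0 q1 q2 w0 w1 w2 s0 s1 s2 t0 t1 t2 : K} : Cons p0 p1 p2 q0 q1 q2 w0 w1 w2 -> p0 * q0 + p1 * q1 + p2 * q2 = 0 -> (q0 * s0 + p0 * t0) + (q1 * s1 + p1 * t1) + (q2 * s2 + p2 * t2) = 0 -> (- (q2 ^+ 2 * w1 * t0) - q1 ^+ 2 * w2 * t0 + q0 * q2 * w1 * t2 + q0 * q1 * w2 * t1 - p2 * q2 * s0 - p1 * q1 * s0 + p0 * q2 * s2 + p0 * q1 * s1) = 0.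
Proof.
move=> [g1_0 [g1_1 [g1_2 [g2_0 [g2_1 [g2_2 [g3_0 [g3_1 [g3_2 g4]]]]]]]]] hs hC.
transitivity ((- (t0)) * (p0 ^+ 2 + w1 * q2 ^+ 2 + w2 * q1 ^+ 2) + (- (t1)) * (p0 * p1 - w2 * q0 * q1) + (- (t2)) * (p2 * p0 - w1 * q2 * q0) + (- (s0)) * (p0 * q0 + p1 * q1 + p2 * q2) + (p0) * ((q0 * s0 + p0 * t0) + (q1 * s1 + p1 * t1) + (q2 * s2 + p2 * t2))); first ring.
by rewrite g1_0 g3_0 g3_2 hs hC; ring.
Qed.
Lemma PzT00 z y : Pz z (iS a0) (iS a0) y = 0.
Proof. csimp; ring. Qed.
Lemma PzT01 z y : Pz z (iS a0) (iS a1) y = ((v z + jc a2) * y (iS a2)).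
Proof. csimp; ring. Qed.
Lemma PzT02 z y : Pz z (iS a0) (iS a2) y = (- ((v z + jc a1) * y (iS a1))).
Proof. csimp; ring. Qed.
Lemma PzT03 z y : Pz z (iS a0) (iT a0) y = 0.
Proof. csimp; ring. Qed.
Lemma PzT04 z y : Pz z (iS a0) (iT a1) y = ((v z + jc a1) * y (iT a2)).
Proof. csimp; ring. Qed.
Lemma PzT05 z y : Pz z (iS a0) (iT a2) y = (- ((v z + jc a2) * y (iT a1))).
Proof. csimp; ring. Qed.
Lemma PzT10 z y : Pz z (iS a1) (iS a0) y = (- ((v z + jc a2) * y (iS a2))).
Proof. csimp; ring. Qed.
Lemma PzT11 z y : Pz z (iS a1) (iS a1) y = 0.
Proof. csimp; ring. Qed.
Lemma PzT12 z y : Pz z (iS a1) (iS a2) y = ((v z + jc a0) * y (iS a0)).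
Proof. csimp; ring. Qed.
Lemma PzT13 z y : Pz z (iS a1) (iT a0) y = (- ((v z + jc a0) * y (iT a2))).
Proof. csimp; ring. Qed.
Lemma PzT14 z y : Pz z (iS a1) (iT a1) y = 0.
Proof. csimp; ring. Qed.
Lemma PzT15 z y : Pz z (iS a1) (iT a2) y = ((v z + jc a2) * y (iT a0)).
Proof. csimp; ring. Qed.
Lemma PzT20 z y : Pz z (iS a2) (iS a0) y = ((v z + jc a1) * y (iS a1)).
Proof. csimp; ring. Qed.
Lemma PzT21 z y : Pz z (iS a2) (iS a1) y = (- ((v z + jc a0) * y (iS a0))).
Proof. csimp; ring. Qed.
Lemma PzT22 z y : Pz z (iS a2) (iS a2) y = 0.
Proof. csimp; ring. Qed.
Lemma PzT23 z y : Pz z (iS a2) (iT a0) y = ((v z + jc a0) * y (iT a1)).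
Proof. csimp; ring. Qed.
Lemma PzT24 z y : Pz z (iS a2) (iT a1) y = (- ((v z + jc a1) * y (iT a0))).
Proof. csimp; ring. Qed.
Lemma PzT25 z y : Pz z (iS a2) (iT a2) y = 0.
Proof. csimp; ring. Qed.
Lemma PzT30 z y : Pz z (iT a0) (iS a0) y = 0.
Proof. csimp; ring. Qed.
Lemma PzT31 z y : Pz z (iT a0) (iS a1) y = ((v z + jc a0) * y (iT a2)).
Proof. csimp; ring. Qed.
Lemma PzT32 z y : Pz z (iT a0) (iS a2) y = (- ((v z + jc a0) * y (iT a1))).
Proof. csimp; ring. Qed.
Lemma PzT33 z y : Pz z (iT a0) (iT a0) y = 0.
Proof. csimp; ring. Qed.
Lemma PzT34 z y : Pz z (iT a0) (iT a1) y = (y (iS a2)).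
Proof. csimp; ring. Qed.
Lemma PzT35 z y : Pz z (iT a0) (iT a2) y = (- (y (iS a1))).
Proof. csimp; ring. Qed.
Lemma PzT40 z y : Pz z (iT a1) (iS a0) y = (- ((v z + jc a1) * y (iT a2))).
Proof. csimp; ring. Qed.
Lemma PzT41 z y : Pz z (iT a1) (iS a1) y = 0.
Proof. csimp; ring. Qed.
Lemma PzT42 z y : Pz z (iT a1) (iS a2) y = ((v z + jc a1) * y (iT a0)).
Proof. csimp; ring. Qed.
Lemma PzT43 z y : Pz z (iT a1) (iT a0) y = (- (y (iS a2))).
Proof. csimp; ring. Qed.
Lemma PzT44 z y : Pz z (iT a1) (iT a1) y = 0.
Proof. csimp; ring. Qed.
Lemma PzT45 z y : Pz z (iT a1) (iT a2) y = (y (iS a0)).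
Proof. csimp; ring. Qed.
Lemma PzT50 z y : Pz z (iT a2) (iS a0) y = ((v z + jc a2) * y (iT a1)).
Proof. csimp; ring. Qed.
Lemma PzT51 z y : Pz z (iT a2) (iS a1) y = (- ((v z + jc a2) * y (iT a0))).
Proof. csimp; ring. Qed.
Lemma PzT52 z y : Pz z (iT a2) (iS a2) y = 0.
Proof. csimp; ring. Qed.
Lemma PzT53 z y : Pz z (iT a2) (iT a0) y = (y (iS a1)).
Proof. csimp; ring. Qed.
Lemma PzT54 z y : Pz z (iT a2) (iT a1) y = (- (y (iS a0))).
Proof. csimp; ring. Qed.
Lemma PzT55 z y : Pz z (iT a2) (iT a2) y = 0.
Proof. csimp; ring. Qed.
Ltac hsimp := rewrite /hz sum7nz sum3 !Cfr_S !Cfr_T ?PzT00 ?PzT01 ?PzT02 ?PzT03 ?PzT04 ?PzT05 ?PzT10 ?PzT11 ?PzT12 ?PzT13 ?PzT14 ?PzT15 ?PzT20 ?PzT21 ?PzT22 ?PzT23 ?PzT24 ?PzT25 ?PzT30 ?PzT31 ?PzT32 ?PzT33 ?PzT34 ?PzT35 ?PzT40 ?PzT41 ?PzT42 ?PzT43 ?PzT44 ?PzT45 ?PzT50 ?PzT51 ?PzT52 ?PzT53 ?PzT54 ?PzT55.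
Lemma hzT0 z y : hz z (iS a0) y = (- (B a2 z * (v z + jc a1) * y (iS a1)) + B a1 z * (v z + jc a2) * y (iS a2) - A a2 z * (v z + jc a2) * y (iT a1) + A a1 z * (v z + jc a1) * y (iT a2)).
Proof. hsimp; ring. Qed.
Lemma hzT1 z y : hz z (iS a1) y = (B a2 z * (v z + jc a0) * y (iS a0) - B a0 z * (v z + jc a2) * y (iS a2) + A a2 z * (v z + jc a2) * y (iT a0) - A a0 z * (v z + jc a0) * y (iT a2)).
Proof. hsimp; ring. Qed.
Lemma hzT2 z y : hz z (iS a2) y = (- (B a1 z * (v z + jc a0) * y (iS a0)) + B a0 z * (v z + jc a1) * y (iS a1) - A a1 z * (v z + jc a1) * y (iT a0) + A a0 z * (v z + jc a0) * y (iT a1)).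
Proof. hsimp; ring. Qed.
Lemma hzT3 z y : hz z (iT a0) y = (- (B a2 z * (v z + jc a0) * y (iT a1)) + B a1 z * (v z + jc a0) * y (iT a2) - A a2 z * y (iS a1) + A a1 z * y (iS a2)).
Proof. hsimp; ring. Qed.
Lemma hzT4 z y : hz z (iT a1) y = (B a2 z * (v z + jc a1) * y (iT a0) - B a0 z * (v z + jc a1) * y (iT a2) + A a2 z * y (iS a0) - A a0 z * y (iS a2)).
Proof. hsimp; ring. Qed.
Lemma hzT5 z y : hz z (iT a2) y = (- (B a1 z * (v z + jc a2) * y (iT a0)) + B a0 z * (v z + jc a2) * y (iT a1) - A a1 z * y (iS a0) + A a0 z * y (iS a1)).
Proof. hsimp; ring. Qed.

Lemma F1 z (Zv : pt K) (HC : Cons (A a0 z) (A a1 z) (A a2 z) (B a0 z) (B a1 z) (B a2 z) (v z + jc a0) (v z + jc a1) (v z + jc a2))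
  (hs : A a0 z * B a0 z + A a1 z * B a1 z + A a2 z * B a2 z = 0)
  (hZS : forall a, Zv (iS a) = A a z) (hZT : forall a, Zv (iT a) = B a z) i j k :
  i != iz -> j != iz -> k != iz ->
  Zv i * Pz z j k Zv + Zv j * Pz z k i Zv + Zv k * Pz z i j Zv = 0.
Proof.
move=> hi hj hk.
case/ord6: hi => [->|[->|[->|[->|[->|->]]]]]; case/ord6: hj => [->|[->|[->|[->|[->|->]]]]];
  case/ord6: hk => [->|[->|[->|[->|[->|->]]]]]; rewrite ?PzT00 ?PzT01 ?PzT02 ?PzT03 ?PzT04 ?PzT05 ?PzT10 ?PzT11 ?PzT12 ?PzT13 ?PzT14 ?PzT15 ?PzT20 ?PzT21 ?PzT22 ?PzT23 ?PzT24 ?PzT25 ?PzT30 ?PzT31 ?PzT32 ?PzT33 ?PzT34 ?PzT35 ?PzT40 ?PzT41 ?PzT42 ?PzT43 ?PzT44 ?PzT45 ?PzT50 ?PzT51 ?PzT52 ?PzT53 ?PzT54 ?PzT55 ?hZS ?hZT.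
- ring.
- ring.
- ring.
- ring.
- ring.
- ring.
- ring.
- ring.
- apply: (lin1 (cF1_012 HC hs)); ring.
- apply: (lin1 (cF1_013 HC hs)); ring.
- apply: (lin1 (cF1_014 HC hs)); ring.
- apply: (lin1 (cF1_015 HC hs)); ring.
- ring.
- apply: (lin1n (cF1_012 HC hs)); ring.
- ring.
- apply: (lin1 (cF1_023 HC hs)); ring.
- apply: (lin1 (cF1_024 HC hs)); ring.
- apply: (lin1 (cF1_025 HC hs)); ring.
- ring.
- apply: (lin1n (cF1_013 HC hs)); ring.
- apply: (lin1n (cF1_023 HC hs)); ring.
- ring.
- apply: (lin1 (cF1_034 HC hs)); ring.
- apply: (lin1 (cF1_035 HC hs)); ring.
- ring.
- apply: (lin1n (cF1_014 HC hs)); ring.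
- apply: (lin1n (cF1_024 HC hs)); ring.
- apply: (lin1n (cF1_034 HC hs)); ring.
- ring.
- apply: (lin1 (cF1_045 HC hs)); ring.
- ring.
- apply: (lin1n (cF1_015 HC hs)); ring.
- apply: (lin1n (cF1_025 HC hs)); ring.
- apply: (lin1n (cF1_035 HC hs)); ring.
- apply: (lin1n (cF1_045 HC hs)); ring.
- ring.
- ring.
- ring.
- apply: (lin1n (cF1_012 HC hs)); ring.
- apply: (lin1n (cF1_013 HC hs)); ring.
- apply: (lin1n (cF1_014 HC hs)); ring.
- apply: (lin1n (cF1_015 HC hs)); ring.
- ring.
- ring.
- ring.
- ring.
- ring.
- ring.
- apply: (lin1 (cF1_012 HC hs)); ring.
- ring.
- ring.
- apply: (lin1 (cF1_123 HC hs)); ring.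
- apply: (lin1 (cF1_124 HC hs)); ring.
- apply: (lin1 (cF1_125 HC hs)); ring.
- apply: (lin1 (cF1_013 HC hs)); ring.
- ring.
- apply: (lin1n (cF1_123 HC hs)); ring.
- ring.
- apply: (lin1 (cF1_134 HC hs)); ring.
- apply: (lin1 (cF1_135 HC hs)); ring.
- apply: (lin1 (cF1_014 HC hs)); ring.
- ring.
- apply: (lin1n (cF1_124 HC hs)); ring.
- apply: (lin1n (cF1_134 HC hs)); ring.
- ring.
- apply: (lin1 (cF1_145 HC hs)); ring.
- apply: (lin1 (cF1_015 HC hs)); ring.
- ring.
- apply: (lin1n (cF1_125 HC hs)); ring.
- apply: (lin1n (cF1_135 HC hs)); ring.
- apply: (lin1n (cF1_145 HC hs)); ring.
- ring.
- ring.
- apply: (lin1 (cF1_012 HC hs)); ring.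
- ring.
- apply: (lin1n (cF1_023 HC hs)); ring.
- apply: (lin1n (cF1_024 HC hs)); ring.
- apply: (lin1n (cF1_025 HC hs)); ring.
- apply: (lin1n (cF1_012 HC hs)); ring.
- ring.
- ring.
- apply: (lin1n (cF1_123 HC hs)); ring.
- apply: (lin1n (cF1_124 HC hs)); ring.
- apply: (lin1n (cF1_125 HC hs)); ring.
- ring.
- ring.
- ring.
- ring.
- ring.
- ring.
- apply: (lin1 (cF1_023 HC hs)); ring.
- apply: (lin1 (cF1_123 HC hs)); ring.
- ring.
- ring.
- apply: (lin1 (cF1_234 HC hs)); ring.
- apply: (lin1 (cF1_235 HC hs)); ring.
- apply: (lin1 (cF1_024 HC hs)); ring.
- apply: (lin1 (cF1_124 HC hs)); ring.
- ring.
- apply: (lin1n (cF1_234 HC hs)); ring.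
- ring.
- apply: (lin1 (cF1_245 HC hs)); ring.
- apply: (lin1 (cF1_025 HC hs)); ring.
- apply: (lin1 (cF1_125 HC hs)); ring.
- ring.
- apply: (lin1n (cF1_235 HC hs)); ring.
- apply: (lin1n (cF1_245 HC hs)); ring.
- ring.
- ring.
- apply: (lin1 (cF1_013 HC hs)); ring.
- apply: (lin1 (cF1_023 HC hs)); ring.
- ring.
- apply: (lin1n (cF1_034 HC hs)); ring.
- apply: (lin1n (cF1_035 HC hs)); ring.
- apply: (lin1n (cF1_013 HC hs)); ring.
- ring.
- apply: (lin1 (cF1_123 HC hs)); ring.
- ring.
- apply: (lin1n (cF1_134 HC hs)); ring.
- apply: (lin1n (cF1_135 HC hs)); ring.
- apply: (lin1n (cF1_023 HC hs)); ring.
- apply: (lin1n (cF1_123 HC hs)); ring.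
- ring.
- ring.
- apply: (lin1n (cF1_234 HC hs)); ring.
- apply: (lin1n (cF1_235 HC hs)); ring.
- ring.
- ring.
- ring.
- ring.
- ring.
- ring.
- apply: (lin1 (cF1_034 HC hs)); ring.
- apply: (lin1 (cF1_134 HC hs)); ring.
- apply: (lin1 (cF1_234 HC hs)); ring.
- ring.
- ring.
- apply: (lin1 (cF1_345 HC hs)); ring.
- apply: (lin1 (cF1_035 HC hs)); ring.
- apply: (lin1 (cF1_135 HC hs)); ring.
- apply: (lin1 (cF1_235 HC hs)); ring.
- ring.
- apply: (lin1n (cF1_345 HC hs)); ring.
- ring.
- ring.
- apply: (lin1 (cF1_014 HC hs)); ring.
- apply: (lin1 (cF1_024 HC hs)); ring.
- apply: (lin1 (cF1_034 HC hs)); ring.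
- ring.
- apply: (lin1n (cF1_045 HC hs)); ring.
- apply: (lin1n (cF1_014 HC hs)); ring.
- ring.
- apply: (lin1 (cF1_124 HC hs)); ring.
- apply: (lin1 (cF1_134 HC hs)); ring.
- ring.
- apply: (lin1n (cF1_145 HC hs)); ring.
- apply: (lin1n (cF1_024 HC hs)); ring.
- apply: (lin1n (cF1_124 HC hs)); ring.
- ring.
- apply: (lin1 (cF1_234 HC hs)); ring.
- ring.
- apply: (lin1n (cF1_245 HC hs)); ring.
- apply: (lin1n (cF1_034 HC hs)); ring.
- apply: (lin1n (cF1_134 HC hs)); ring.
- apply: (lin1n (cF1_234 HC hs)); ring.
- ring.
- ring.
- apply: (lin1n (cF1_345 HC hs)); ring.
- ring.
- ring.
- ring.
- ring.
- ring.
- ring.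
- apply: (lin1 (cF1_045 HC hs)); ring.
- apply: (lin1 (cF1_145 HC hs)); ring.
- apply: (lin1 (cF1_245 HC hs)); ring.
- apply: (lin1 (cF1_345 HC hs)); ring.
- ring.
- ring.
- ring.
- apply: (lin1 (cF1_015 HC hs)); ring.
- apply: (lin1 (cF1_025 HC hs)); ring.
- apply: (lin1 (cF1_035 HC hs)); ring.
- apply: (lin1 (cF1_045 HC hs)); ring.
- ring.
- apply: (lin1n (cF1_015 HC hs)); ring.
- ring.
- apply: (lin1 (cF1_125 HC hs)); ring.
- apply: (lin1 (cF1_135 HC hs)); ring.
- apply: (lin1 (cF1_145 HC hs)); ring.
- ring.
- apply: (lin1n (cF1_025 HC hs)); ring.
- apply: (lin1n (cF1_125 HC hs)); ring.
- ring.
- apply: (lin1 (cF1_235 HC hs)); ring.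
- apply: (lin1 (cF1_245 HC hs)); ring.
- ring.
- apply: (lin1n (cF1_035 HC hs)); ring.
- apply: (lin1n (cF1_135 HC hs)); ring.
- apply: (lin1n (cF1_235 HC hs)); ring.
- ring.
- apply: (lin1 (cF1_345 HC hs)); ring.
- ring.
- apply: (lin1n (cF1_045 HC hs)); ring.
- apply: (lin1n (cF1_145 HC hs)); ring.
- apply: (lin1n (cF1_245 HC hs)); ring.
- apply: (lin1n (cF1_345 HC hs)); ring.
- ring.
- ring.
- ring.
- ring.
- ring.
- ring.
- ring.
- ring.
Qed.

Lemma F2 z (y Zv : pt K) (HC : Cons (A a0 z) (A a1 z) (A a2 z) (B a0 z) (B a1 z) (B a2 z) (v z + jc a0) (v z + jc a1) (v z + jc a2))
  (hs : A a0 z * B a0 z + A a1 z * B a1 z + A a2 z * B a2 z = 0)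
  (hZS : forall a, Zv (iS a) = A a z) (hZT : forall a, Zv (iT a) = B a z)
  (hC0 : Cfr z y = 0) i j :
  i != iz -> j != iz -> Zv i * hz z j y - Zv j * hz z i y = 0.
Proof.
have hC := hC0; rewrite /Cfr sum3 in hC.
move=> hi hj.
case/ord6: hi => [->|[->|[->|[->|[->|->]]]]]; case/ord6: hj => [->|[->|[->|[->|[->|->]]]]];
  rewrite ?hzT0 ?hzT1 ?hzT2 ?hzT3 ?hzT4 ?hzT5 ?hZS ?hZT.
- ring.
- apply: (lin1 (cF2_01 HC hs hC)); ring.
- apply: (lin1 (cF2_02 HC hs hC)); ring.
- apply: (lin1 (cF2_03 HC hs hC)); ring.
- apply: (lin1 (cF2_04 HC hs hC)); ring.
- apply: (lin1 (cF2_05 HC hs hC)); ring.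
- apply: (lin1n (cF2_01 HC hs hC)); ring.
- ring.
- apply: (lin1 (cF2_12 HC hs hC)); ring.
- apply: (lin1 (cF2_13 HC hs hC)); ring.
- apply: (lin1 (cF2_14 HC hs hC)); ring.
- apply: (lin1 (cF2_15 HC hs hC)); ring.
- apply: (lin1n (cF2_02 HC hs hC)); ring.
- apply: (lin1n (cF2_12 HC hs hC)); ring.
- ring.
- apply: (lin1 (cF2_23 HC hs hC)); ring.
- apply: (lin1 (cF2_24 HC hs hC)); ring.
- apply: (lin1 (cF2_25 HC hs hC)); ring.
- apply: (lin1n (cF2_03 HC hs hC)); ring.
- apply: (lin1n (cF2_13 HC hs hC)); ring.
- apply: (lin1n (cF2_23 HC hs hC)); ring.
- ring.
- apply: (lin1 (cF2_34 HC hs hC)); ring.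
- apply: (lin1 (cF2_35 HC hs hC)); ring.
- apply: (lin1n (cF2_04 HC hs hC)); ring.
- apply: (lin1n (cF2_14 HC hs hC)); ring.
- apply: (lin1n (cF2_24 HC hs hC)); ring.
- apply: (lin1n (cF2_34 HC hs hC)); ring.
- ring.
- apply: (lin1 (cF2_45 HC hs hC)); ring.
- apply: (lin1n (cF2_05 HC hs hC)); ring.
- apply: (lin1n (cF2_15 HC hs hC)); ring.
- apply: (lin1n (cF2_25 HC hs hC)); ring.
- apply: (lin1n (cF2_35 HC hs hC)); ring.
- apply: (lin1n (cF2_45 HC hs hC)); ring.
- ring.
Qed.

Definition Lf (Z hx hZ dZ : 'I_7 -> K) (P : 'I_7 -> 'I_7 -> K) (c cZ : K) a b :=
 (if a == iz then (if b == iz then 0 else (hZ b * c - hx b * cZ) / c ^+ 2)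
   else if b == iz then ((- hZ a) * c - (- hx a) * cZ) / c ^+ 2 else P a b)
   - (if b == iz then 0 else hx b / c) * dZ a
   - (if a == iz then 0 else - (hx a / c)) * dZ b.

Lemma comb {Z hx hZ dZ : 'I_7 -> K} {P : 'I_7 -> 'I_7 -> K} {c cZ : K} (i j k : 'I_7) :
 Z iz = 0 -> dZ iz = 0 ->
 (i != iz -> j != iz -> k != iz -> Z i * P j k + Z j * P k i + Z k * P i j = 0) ->
 (forall a b, a != iz -> b != iz -> Z a * hx b - Z b * hx a = 0) ->
 (forall a b, a != iz -> b != iz -> Z a * hZ b - Z b * hZ a = 0) ->
 Z i * - Lf Z hx hZ dZ P c cZ j k + Z j * - Lf Z hx hZ dZ P c cZ k i
   + Z k * - Lf Z hx hZ dZ P c cZ i j = 0.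
Proof.
move=> Z0 dZ0 HF1 Hx HZ; rewrite /Lf.
case: (eqVneq i iz) => [->|hi]; case: (eqVneq j iz) => [->|hj]; case: (eqVneq k iz) => [->|hk];
  rewrite ?eqxx ?(negbTE hi) ?(negbTE hj) ?(negbTE hk) /= ?Z0 ?dZ0.
- ring.
- ring.
- ring.
- transitivity ((c * (Z j * hZ k - Z k * hZ j) - cZ * (Z j * hx k - Z k * hx j)) / c ^+ 2); first ring.
  by rewrite (HZ _ _ hj hk) (Hx _ _ hj hk); ring.
- ring.
- transitivity ((c * (Z k * hZ i - Z i * hZ k) - cZ * (Z k * hx i - Z i * hx k)) / c ^+ 2); first ring.
  by rewrite (HZ _ _ hk hi) (Hx _ _ hk hi); ring.
- transitivity ((c * (Z i * hZ j - Z j * hZ i) - cZ * (Z i * hx j - Z j * hx i)) / c ^+ 2); first ring.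
  by rewrite (HZ _ _ hi hj) (Hx _ _ hi hj); ring.
- transitivity (-(Z i * P j k + Z j * P k i + Z k * P i j) + c^-1 * (dZ j * (Z i * hx k - Z k * hx i)
     + dZ k * (Z j * hx i - Z i * hx j) + dZ i * (Z k * hx j - Z j * hx k))); first ring.
  by rewrite (HF1 hi hj hk) (Hx _ _ hi hk) (Hx _ _ hj hi) (Hx _ _ hk hj); ring.
Qed.

Section AtX.
Variable U : set K.
Hypothesis dA : forall a z, U z -> derivable (A a) z 1.
Hypothesis dB : forall a z, U z -> derivable (B a) z 1.
Variable x : pt K.
Hypothesis Ux : U (x iz).
Hypothesis cnz : Czfr (x iz) x != 0.

Definition Zp : pt K := fun l => Zhat A B l x.
Definition dZ i := pd iz (Zhat A B i) x.

Lemma pdZ l i : l != iz -> pd l (Zhat A B i) x = 0.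
Proof. by move=> hl; apply: pd_const => t; rewrite /Zhat sh_iz. Qed.
Lemma dZz : dZ iz = 0.
Proof. by apply: pd_const => t; rewrite !Z_z. Qed.

Definition ZRv i j :=
  if i == iz then (if j == iz then 0 else
     (hz (x iz) j Zp * Czfr (x iz) x - hz (x iz) j x * Czfr (x iz) Zp) / Czfr (x iz) x ^+ 2)
  else if j == iz then
     ((- hz (x iz) i Zp) * Czfr (x iz) x - (- hz (x iz) i x) * Czfr (x iz) Zp) / Czfr (x iz) x ^+ 2
  else Pz (x iz) i j Zp.

Lemma Rsh l t i j : l != iz -> Rb i j (sh x l t) =
  if i == iz then (if j == iz then 0 else hz (x iz) j (sh x l t) / Czfr (x iz) (sh x l t))
  else if j == iz then - (hz (x iz) i (sh x l t) / Czfr (x iz) (sh x l t)) else Pz (x iz) i j (sh x l t).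
Proof.
move=> hl; rewrite (@R_formula U (sh x l t)) ?sh_iz //.
Qed.

Lemma keyZR i j G : lin7 G -> (forall l, l != iz -> pd l (Rb i j) x = G (e l)) ->
    \sum_(l < 7) Zhat A B l x * pd l (Rb i j) x = G Zp.
Proof.
  move=> lG H; rewrite -(@lin_sumX G Zp lG); apply: eq_bigr => l _.
  case: (eqVneq l iz) => [->|hl]; first by rewrite /Zp Z_z !mul0r.
  by rewrite H.
Qed.

Lemma ZR i j : \sum_(l < 7) Zhat A B l x * pd l (Rb i j) x = ZRv i j.
Proof.
rewrite /ZRv; case: (eqVneq i iz) => [->|hi]; case: (eqVneq j iz) => [->|hj];
  rewrite ?eqxx ?(negbTE hi) ?(negbTE hj).
- have l0 : lin7 (fun _ => 0) by move=> s y1 y2; rewrite mulr0 addr0.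
  apply: (@keyZR _ _ _ l0) => l hl; apply: pd_const => t.
  by rewrite Rsh // (@R_formula U x) // !eqxx.
- apply: (@keyZR _ _ _ (@lin_ratio _ _ x (lin_hz _ j) (lin_Czfr _))) => l hl.
  apply: pd_ratio; [exact: lin_hz | exact: lin_Czfr | exact: cnz |] => t.
  by rewrite Rsh // eqxx (negbTE hj).
- have := (@keyZR i iz _ (@lin_ratio _ _ x (@lin_opp _ (lin_hz (x iz) i)) (lin_Czfr (x iz)))).
  move=> -> // l hl.
  apply: (@pd_ratio l _ (fun y => - hz (x iz) i y) (Czfr (x iz)) x); [exact: (@lin_opp _ (lin_hz _ i)) | exact: lin_Czfr | exact: cnz |] => t.
  by rewrite Rsh // eqxx (negbTE hi) mulNr.
- apply: (@keyZR _ _ _ (lin_Pz _ i j)) => l hl.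
  apply: pd_lin; first exact: lin_Pz.
  by move=> t; rewrite Rsh // (negbTE hi) (negbTE hj).
Qed.

Lemma lieE i j : lie (Zhat A B) Rb i j x = ZRv i j - Rb iz j x * dZ i - Rb i iz x * dZ j.
Proof.
rewrite /lie ZR.
rewrite (bigD1 iz) //= big1 ?addr0; last by move=> l hl; rewrite pdZ // mulr0.
rewrite [X in _ - _ - X](bigD1 iz) //= big1 ?addr0 //; by move=> l hl; rewrite pdZ // mulr0.
Qed.


Lemma Rb_izb b : Rb iz b x = if b == iz then 0 else hz (x iz) b x / Czfr (x iz) x.
Proof. by rewrite (@R_formula U x Ux dA dB) eqxx. Qed.
Lemma Rb_aiz a : Rb a iz x = if a == iz then 0 else - (hz (x iz) a x / Czfr (x iz) x).
Proof. by rewrite (@R_formula U x Ux dA dB) eqxx; case: (a == iz). Qed.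

Lemma final (HC : Cons (A a0 (x iz)) (A a1 (x iz)) (A a2 (x iz)) (B a0 (x iz)) (B a1 (x iz)) (B a2 (x iz))
     (v (x iz) + jc a0) (v (x iz) + jc a1) (v (x iz) + jc a2))
  (hs : A a0 (x iz) * B a0 (x iz) + A a1 (x iz) * B a1 (x iz) + A a2 (x iz) * B a2 (x iz) = 0)
  (hCx : Cfr (x iz) x = 0) i j k :
  wedge12 (Zhat A B) (dR Rb (Zhat A B)) i j k x = 0.
Proof.
rewrite /wedge12 /dR !lieE !Rb_izb !Rb_aiz.
have hZS : forall a, Zp (iS a) = A a (x iz) by move=> a; rewrite /Zp Z_S.
have hZT : forall a, Zp (iT a) = B a (x iz) by move=> a; rewrite /Zp Z_T.
have hCZ : Cfr (x iz) Zp = 0.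
  rewrite /Cfr sum3 !hZS !hZT.
  transitivity (2 * (A a0 (x iz) * B a0 (x iz) + A a1 (x iz) * B a1 (x iz) + A a2 (x iz) * B a2 (x iz))); first ring.
  by rewrite hs mulr0.
exact: (comb (Z := Zp) (hx := fun l => hz (x iz) l x) (hZ := fun l => hz (x iz) l Zp) (dZ := dZ)
  (P := fun a b => Pz (x iz) a b Zp) (c := Czfr (x iz) x) (cZ := Czfr (x iz) Zp) i j k
  (Z_z x) dZz (@F1 (x iz) Zp HC hs hZS hZT i j k) (@F2 (x iz) x Zp HC hs hZS hZT hCx)
  (@F2 (x iz) Zp Zp HC hs hZS hZT hCZ)).
Qed.

End AtX.

Lemma final_main (U : set K) :
  injective jc ->
  open U ->
  (forall a z, U z -> derivable (A a) z 1) ->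
  (forall a z, U z -> derivable (B a) z 1) ->
  (forall a z, U z ->
     let b := nx a in let c := nx (nx a) in
     [/\ A a z ^+ 2 + (v z + jc b) * B c z ^+ 2 + (v z + jc c) * B b z ^+ 2 = 0,
         (v z + jc a) * A a z * B b z - (v z + jc b) * A b z * B a z = 0 &
         A a z * A b z - (v z + jc c) * B a z * B b z = 0]) ->
  (forall z, U z -> \sum_(a < 3) (v z + jc a) * A a z ^+ 2 = 0) ->
  forall x : pt K, U (x iz) ->
    C2hat A B x = 0 ->
    pd iz (C2hat A B) x != 0 ->
    forall i j k : 'I_7,
      wedge12 (Zhat A B)
        (dR (bv_add (liftbv (C2hat A B) (Qbv jc))
                    (bv_scale (fun y => v (y iz)) (liftbv (C2hat A B) (@Pbv K))))
            (Zhat A B)) i j k x = 0.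
Proof.
move=> _ _ dA dB Hc Hs x Ux HC0 Hcz i j k.
have HC : Cons (A a0 (x iz)) (A a1 (x iz)) (A a2 (x iz)) (B a0 (x iz)) (B a1 (x iz)) (B a2 (x iz))
     (v (x iz) + jc a0) (v (x iz) + jc a1) (v (x iz) + jc a2).
  move: (Hc a0 _ Ux) (Hc a1 _ Ux) (Hc a2 _ Ux) (Hs _ Ux); cbv zeta.
  rewrite sum3 ?nx0 ?nx1 ?nx2 ?nx0 => -[e10 e20 e30] [e11 e21 e31] [e12 e22 e32] e4.
  by rewrite /Cons; repeat split; assumption.
have hs := csAB HC.
have cnz : Czfr (x iz) x != 0 by rewrite -(@pdC_z U x Ux dA dB).
exact: (@final U dA dB x Ux cnz HC hs HC0 i j k).
Qed.

End Main.

Theorem lemma7 (K : numFieldType) (jc : 'I_3 -> K) (A B : 'I_3 -> K -> K)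
  (v : K -> K) (U : set K) :
  injective jc ->
  open U ->
  (forall a z, U z -> derivable (A a) z 1) ->
  (forall a z, U z -> derivable (B a) z 1) ->
  (forall a z, U z ->
     let b := nx a in let c := nx (nx a) in
     [/\ A a z ^+ 2 + (v z + jc b) * B c z ^+ 2 + (v z + jc c) * B b z ^+ 2 = 0,
         (v z + jc a) * A a z * B b z - (v z + jc b) * A b z * B a z = 0 &
         A a z * A b z - (v z + jc c) * B a z * B b z = 0]) ->
  (forall z, U z -> \sum_(a < 3) (v z + jc a) * A a z ^+ 2 = 0) ->
  forall x : pt K, U (x iz) ->
    C2hat A B x = 0 ->
    pd iz (C2hat A B) x != 0 ->
    forall i j k : 'I_7,
      wedge12 (Zhat A B)
        (dR (bv_add (liftbv (C2hat A B) (Qbv jc))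
                    (bv_scale (fun y => v (y iz)) (liftbv (C2hat A B) (@Pbv K))))
            (Zhat A B)) i j k x = 0.
Proof.
exact: final_main.
Qed.
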